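(* Let $m>1$, $N\ge2$, $\chi>0$, $X_0\in\mathcal R^N$, and let $X$ be the maximal solution in $\mathcal R^N$ on $[0,T)$ of the gradient flow system with $X(0)=X_0$. Define $f_{m+1}(t)=\frac1{m+1}|X(t)|^{m+1}$. Then $f_{m+1}$ is concave on $[0,T)$, and for all $t\in[0,T)$, $$\frac{df_{m+1}}{dt}(t)=(m-1)\,\mathcal F^N_m(X(t))\,|X(t)|^{m-1},\qquad \frac{d^2f_{m+1}}{dt^2}(t)=-\frac{m-1}{m+1}\,f_{m+1}(t)^{-1}\,\mathcal H^N_{m+1}\Big(\frac{X(t)}{|X(t)|}\Big),$$ where for $Y\in\mathcal R^N$ with $|Y|=1$, $\mathcal H^N_{m+1}(Y)=|\nabla\mathcal F^N_m(Y)|^2-\big((m-1)\mathcal F^N_m(Y)\big)^2\ge0$.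
   Context: $\mathcal R^N=\{X\in\mathbb R^N: X_1<\dots<X_N,\ \sum_iX_i=0\}$; $|\cdot|$ is the Euclidean norm and $\nabla$ the Euclidean gradient on $\mathbb R^N$. $\mathcal F^N_m(X)=\frac1{m-1}\sum_{i=1}^{N-1}(X_{i+1}-X_i)^{1-m}-\frac{\chi}{m-1}\sum_{1\le i\ne j\le N}|X_i-X_j|^{1-m}$. Gradient flow system: for $i=1,\dots,N$, $\dot X_i=-(X_{i+1}-X_i)^{-m}+(X_i-X_{i-1})^{-m}+2\chi\sum_{j\ne i}\mathrm{sign}(j-i)|X_j-X_i|^{-m}$, the first term absent for $i=N$ and the second for $i=1$ (i.e. $\dot X=-\nabla\mathcal F^N_m(X)$). *)

(* Defs.v *)
From Stdlib Require Import Reals Lra Lia List.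
From Coquelicot Require Import Coquelicot.
Open Scope R_scope.

(* Vectors of R^N are represented as functions nat -> R, with coordinates
   X_1, ..., X_N of the paper stored at indices 0, ..., N-1.
   Values at indices >= N are irrelevant (never used). *)

Definition sumR (n : nat) (f : nat -> R) : R :=
  fold_right Rplus 0 (map f (seq 0 n)).

Definition normv (N : nat) (X : nat -> R) : R := sqrt (sumR N (fun i => X i ^ 2)).

Definition inRN (N : nat) (X : nat -> R) : Prop :=
  (forall i, (i + 1 < N)%nat -> X i < X (i + 1)%nat) /\ sumR N X = 0.

Definition FNm (N : nat) (m chi : R) (X : nat -> R) : R :=
  / (m - 1) * sumR (N - 1) (fun i => Rpower (X (i + 1)%nat - X i) (1 - m))
  - chi / (m - 1) *
      sumR N (fun i => sumR N (fun j =>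
        if Nat.eqb i j then 0 else Rpower (Rabs (X i - X j)) (1 - m))).

Definition gradF (N : nat) (m chi : R) (Y : nat -> R) (i : nat) : R :=
  Derive (fun s => FNm N m chi (fun j => if Nat.eqb j i then Y j + s else Y j)) 0.

Definition HNm1 (N : nat) (m chi : R) (Y : nat -> R) : R :=
  sumR N (fun i => gradF N m chi Y i ^ 2) - ((m - 1) * FNm N m chi Y) ^ 2.

Definition sgn_nat (j i : nat) : R := if Nat.ltb i j then 1 else -1.

Definition rhs (N : nat) (m chi : R) (X : nat -> R) (i : nat) : R :=
  (if Nat.ltb (i + 1) N then - Rpower (X (i + 1)%nat - X i) (- m) else 0)
  + (if Nat.ltb 0 i then Rpower (X i - X (i - 1)%nat) (- m) else 0)
  + 2 * chi * sumR N (fun j =>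
       if Nat.eqb j i then 0 else sgn_nat j i * Rpower (Rabs (X j - X i)) (- m)).

Definition in_0T (T : Rbar) (t : R) : Prop := 0 <= t /\ Rbar_lt t T.

(* derivative of f at t relative to the set D (one-sided at endpoints) *)
Definition is_deriv_in (D : R -> Prop) (f : R -> R) (t l : R) : Prop :=
  filterlim (fun s => (f s - f t) / (s - t))
    (within (fun s => D s /\ s <> t) (locally t)) (locally l).

Definition is_solution (N : nat) (m chi : R) (X0 : nat -> R) (T : Rbar)
    (X : R -> nat -> R) : Prop :=
  Rbar_lt 0 T /\
  (forall i, (i < N)%nat -> X 0 i = X0 i) /\
  (forall t, in_0T T t ->
     inRN N (X t) /\
     forall i, (i < N)%nat ->
       is_deriv_in (in_0T T) (fun s => X s i) t (rhs N m chi (X t) i)).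

Definition is_maximal_solution (N : nat) (m chi : R) (X0 : nat -> R) (T : Rbar)
    (X : R -> nat -> R) : Prop :=
  is_solution N m chi X0 T X /\
  forall (T' : Rbar) (Y : R -> nat -> R),
    is_solution N m chi X0 T' Y ->
    (forall t, in_0T T t -> forall i, (i < N)%nat -> Y t i = X t i) ->
    Rbar_le T' T.

Definition concave_on (D : R -> Prop) (f : R -> R) : Prop :=
  forall x y l, D x -> D y -> 0 <= l <= 1 ->
    l * f x + (1 - l) * f y <= f (l * x + (1 - l) * y).

(* Main.v *)
Require Import Defs.
From Stdlib Require Import Reals Lra Lia List FunctionalExtensionality.
From Coquelicot Require Import Coquelicot.
Open Scope R_scope.

Definition GF (D : R -> Prop) (t : R) := within (fun s => D s /\ s <> t) (@locally R_UniformSpace t).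

Global Instance GF_filter D t : Filter (GF D t).
Proof. apply within_filter, locally_filter. Qed.
Local Hint Resolve GF_filter : core.

Lemma lim_plus {T} (F : (T -> Prop) -> Prop) {FF : Filter F} f g a b :
  filterlim f F (locally a) -> filterlim g F (locally b) ->
  filterlim (fun x => f x + g x) F (locally (a + b)).
Proof.
  intros Hf Hg. eapply filterlim_comp_2; [exact Hf|exact Hg|].
  exact (@filterlim_plus R_AbsRing R_NormedModule a b).
Qed.

Lemma lim_mult {T} (F : (T -> Prop) -> Prop) {FF : Filter F} f g a b :
  filterlim f F (locally a) -> filterlim g F (locally b) ->
  filterlim (fun x => f x * g x) F (locally (a * b)).
Proof.
  intros Hf Hg. eapply filterlim_comp_2; [exact Hf|exact Hg|].
  exact (@filterlim_mult R_AbsRing a b).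
Qed.

Lemma lim_id D t : filterlim (fun s => s) (GF D t) (locally t).
Proof.
  intros P HP. unfold GF, within, filtermap. apply filter_imp with (2 := HP). auto.
Qed.

Lemma GF_ev D t (P : R -> Prop) : (forall s, D s -> s <> t -> P s) -> GF D t P.
Proof.
  intros H. exists (mkposreal 1 Rlt_0_1). intros y _ [H1 H2]. auto.
Qed.

Lemma lim_ext D t (f g : R -> R) (l : R) : (forall s, D s -> s <> t -> f s = g s) ->
  filterlim f (GF D t) (locally l) -> filterlim g (GF D t) (locally l).
Proof.
  intros H. apply filterlim_ext_loc. apply GF_ev. auto.
Qed.

Lemma deriv_cont D (f : R -> R) t l : is_deriv_in D f t l ->
  filterlim f (GF D t) (locally (f t)).
Proof.
  intros H.
  assert (H2 : filterlim (fun s => f t + ((f s - f t) / (s - t)) * (s + - t)) (GF D t)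
     (locally (f t + l * (t + - t)))).
  { apply (lim_plus (GF D t)). apply filterlim_const. apply (lim_mult (GF D t)). exact H.
    apply (lim_plus (GF D t)). apply lim_id. apply filterlim_const. }
  replace (f t + l * (t + - t)) with (f t) in H2 by ring.
  revert H2. apply lim_ext. intros s _ Hs. field. intro; apply Hs; lra.
Qed.

Lemma deriv_const D t (c : R) : is_deriv_in D (fun _ => c) t 0.
Proof.
  unfold is_deriv_in. eapply lim_ext with (f := fun _ => 0).
  intros s _ Hs. field. intro; apply Hs; lra. apply filterlim_const.
Qed.

Lemma deriv_id D t : is_deriv_in D (fun s => s) t 1.
Proof.
  unfold is_deriv_in. eapply lim_ext with (f := fun _ => 1).
  intros s _ Hs. field. intro; apply Hs; lra. apply filterlim_const.
Qed.

Lemma deriv_plus D (f g : R -> R) t a b : is_deriv_in D f t a -> is_deriv_in D g t b ->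
  is_deriv_in D (fun s => f s + g s) t (a + b).
Proof.
  intros Hf Hg. unfold is_deriv_in.
  eapply lim_ext; [| apply (lim_plus _ _ _ _ _ Hf Hg)].
  intros s _ Hs. simpl. field. intro; apply Hs; lra.
Qed.

Lemma deriv_mult D (f g : R -> R) t a b : is_deriv_in D f t a -> is_deriv_in D g t b ->
  is_deriv_in D (fun s => f s * g s) t (a * g t + f t * b).
Proof.
  intros Hf Hg. unfold is_deriv_in.
  assert (H := lim_plus _ _ _ _ _ (lim_mult _ _ _ _ _ Hf (filterlim_const (g t)))
                  (lim_mult _ _ _ _ _ (deriv_cont _ _ _ _ Hf) Hg)).
  eapply lim_ext; [| exact H].
  intros s _ Hs. simpl. field. intro; apply Hs; lra.
Qed.

Lemma deriv_scal D (f : R -> R) t a c : is_deriv_in D f t a ->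
  is_deriv_in D (fun s => c * f s) t (c * a).
Proof.
  intros Hf. replace (c * a) with (0 * f t + c * a) by ring.
  apply (deriv_mult D (fun _ => c) f). apply deriv_const. auto.
Qed.

Lemma deriv_opp D (f : R -> R) t a : is_deriv_in D f t a ->
  is_deriv_in D (fun s => - f s) t (- a).
Proof.
  intros Hf. replace (-a) with (-1 * a) by ring.
  eapply lim_ext; [| apply (deriv_scal _ _ _ _ (-1) Hf)].
  intros s _ Hs. simpl. field. intro; apply Hs; lra.
Qed.

Lemma deriv_minus D (f g : R -> R) t a b : is_deriv_in D f t a -> is_deriv_in D g t b ->
  is_deriv_in D (fun s => f s - g s) t (a - b).
Proof.
  intros Hf Hg. apply (deriv_plus D f (fun s => - g s)); auto. apply deriv_opp; auto.
Qed.

Lemma ball_R (x e y : R) : ball x e y <-> Rabs (y - x) < e.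
Proof. reflexivity. Qed.

Lemma is_derive_lim (h : R -> R) y0 h' : is_derive h y0 h' ->
  filterlim (fun y => match Req_EM_T y y0 with left _ => h' | right _ => (h y - h y0) / (y - y0) end)
    (@locally R_UniformSpace y0) (locally h').
Proof.
  intros Hd. apply is_derive_Reals in Hd.
  apply filterlim_locally. intros eps.
  destruct (Hd eps (cond_pos eps)) as [d Hdd].
  exists d. intros y Hy. change R in y. apply ball_R in Hy. apply ball_R.
  destruct (Req_EM_T y y0) as [E|E].
  - rewrite Rminus_eq_0, Rabs_R0. apply cond_pos.
  - specialize (Hdd (y - y0)). replace (y0 + (y - y0)) with y in Hdd by ring.
    apply Hdd. intro; apply E; lra. exact Hy.
Qed.

Lemma deriv_chain D (u h : R -> R) t a h' : is_deriv_in D u t a -> is_derive h (u t) h' ->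
  is_deriv_in D (fun s => h (u s)) t (h' * a).
Proof.
  intros Hu Hh. unfold is_deriv_in.
  set (Q := fun y => match Req_EM_T y (u t) with left _ => h' | right _ => (h y - h (u t)) / (y - u t) end).
  assert (HQ : filterlim (fun s => Q (u s)) (GF D t) (locally h')).
  { eapply filterlim_comp. apply (deriv_cont _ _ _ _ Hu). apply is_derive_lim. exact Hh. }
  eapply lim_ext; [| exact (lim_mult _ _ _ _ _ HQ Hu)].
  intros s _ Hs. simpl. unfold Q. destruct (Req_EM_T (u s) (u t)) as [E|E].
  - rewrite E. field. intro; apply Hs; lra.
  - field. split; intro; [apply Hs|apply E]; lra.
Qed.

Lemma deriv_sub D D' (f : R -> R) t l : (forall s, D' s -> D s) -> is_deriv_in D f t l -> is_deriv_in D' f t l.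
Proof.
  intros HD H P HP. specialize (H P HP). unfold filtermap, within in *.
  apply filter_imp with (2 := H). intros x Hx [H1 H2]. apply Hx. split; auto.
Qed.

Lemma sumR_0 f : sumR 0 f = 0.
Proof. reflexivity. Qed.

Lemma sumR_S n f : sumR (S n) f = sumR n f + f n.
Proof.
  unfold sumR. rewrite seq_S, map_app, fold_right_app. simpl.
  generalize (f n). induction (map f (seq 0 n)); simpl; intros; [ring|rewrite IHl; ring].
Qed.

Lemma sumR_ext n f g : (forall i, (i < n)%nat -> f i = g i) -> sumR n f = sumR n g.
Proof.
  induction n; intros H. reflexivity. rewrite !sumR_S, IHn, H; auto; intros; apply H; lia.
Qed.

Lemma sumR_lin n a b f g : sumR n (fun i => a * f i + b * g i) = a * sumR n f + b * sumR n g.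
Proof. induction n. unfold sumR; simpl; ring. rewrite !sumR_S, IHn. ring. Qed.

Lemma sumR_plus n f g : sumR n (fun i => f i + g i) = sumR n f + sumR n g.
Proof. induction n. unfold sumR; simpl; ring. rewrite !sumR_S, IHn. ring. Qed.

Lemma sumR_minus n f g : sumR n (fun i => f i - g i) = sumR n f - sumR n g.
Proof. induction n. unfold sumR; simpl; ring. rewrite !sumR_S, IHn. ring. Qed.

Lemma sumR_scal n a f : sumR n (fun i => a * f i) = a * sumR n f.
Proof. induction n. unfold sumR; simpl; ring. rewrite !sumR_S, IHn. ring. Qed.

Lemma sumR_zero n : sumR n (fun _ => 0) = 0.
Proof. induction n. reflexivity. rewrite sumR_S, IHn. ring. Qed.

Lemma sumR_nonneg n f : (forall i, (i < n)%nat -> 0 <= f i) -> 0 <= sumR n f.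
Proof.
  induction n; intros H. unfold sumR; simpl; lra. rewrite sumR_S.
  assert (0 <= f n) by (apply H; lia). assert (0 <= sumR n f) by (apply IHn; intros; apply H; lia). lra.
Qed.

Lemma sumR_delta n p f : sumR n (fun i => if Nat.eqb i p then f i else 0) =
  if Nat.ltb p n then f p else 0.
Proof.
  induction n. reflexivity. rewrite sumR_S, IHn.
  destruct (Nat.eqb n p) eqn:E.
  - apply Nat.eqb_eq in E; subst.
    assert (Nat.ltb p p = false) as -> by (apply Nat.ltb_ge; lia).
    assert (Nat.ltb p (S p) = true) as -> by (apply Nat.ltb_lt; lia). ring.
  - apply Nat.eqb_neq in E.
    destruct (Nat.ltb_spec p n); destruct (Nat.ltb_spec p (S n)).
    all: try ring. all: lia.
Qed.

Lemma deriv_sumR D n (F : R -> nat -> R) F' t :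
  (forall i, (i < n)%nat -> is_deriv_in D (fun s => F s i) t (F' i)) ->
  is_deriv_in D (fun s => sumR n (F s)) t (sumR n F').
Proof.
  induction n; intros H.
  - unfold sumR; simpl. apply deriv_const.
  - rewrite sumR_S.
    replace (fun s => sumR (S n) (F s)) with (fun s => sumR n (F s) + F s n)
      by (apply functional_extensionality; intros; rewrite sumR_S; auto).
    apply deriv_plus. apply IHn; intros; apply H; lia. apply H; lia.
Qed.

Lemma cs_unit n a b : sumR n (fun i => a i ^ 2) = 1 ->
  (sumR n (fun i => a i * b i)) ^ 2 <= sumR n (fun i => b i ^ 2).
Proof.
  intros Ha. set (c := sumR n (fun i => a i * b i)).
  assert (H := sumR_nonneg n (fun i => (b i - c * a i) ^ 2) ltac:(intros; apply pow2_ge_0)).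
  assert (E : sumR n (fun i => (b i - c * a i) ^ 2) =
     sumR n (fun i => b i ^ 2) - 2 * c * sumR n (fun i => a i * b i) + c ^ 2 * sumR n (fun i => a i ^ 2)).
  { rewrite <- !sumR_scal, <- sumR_minus, <- sumR_plus. apply sumR_ext; intros; ring. }
  rewrite E, Ha in H. fold c in H. nra.
Qed.

Definition ordered (N : nat) (Y : nat -> R) := forall i, (i + 1 < N)%nat -> Y i < Y (i + 1)%nat.

Lemma ord_lt N Y i j : ordered N Y -> (i < j)%nat -> (j < N)%nat -> Y i < Y j.
Proof.
  intros H Hij HjN. induction j. lia.
  destruct (Nat.eq_dec i j) as [->|Hne].
  - replace (S j) with (j+1)%nat by lia. apply H; lia.
  - apply Rlt_trans with (Y j). apply IHj; lia.
    replace (S j) with (j+1)%nat by lia. apply H; lia.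
Qed.

Lemma ord_neq N Y i j : ordered N Y -> i <> j -> (i < N)%nat -> (j < N)%nat -> Y i - Y j <> 0.
Proof.
  intros H Hij Hi Hj. destruct (Nat.lt_total i j) as [|[|]]; try lia.
  - assert (Y i < Y j) by (eapply ord_lt; eauto). lra.
  - assert (Y j < Y i) by (eapply ord_lt; eauto). lra.
Qed.

Definition sg (y : R) : R := if Rlt_dec 0 y then 1 else -1.

Definition DF (N : nat) (m chi : R) (Y V : nat -> R) : R :=
  / (m - 1) * sumR (N - 1) (fun i => (1 - m) * Rpower (Y (i + 1)%nat - Y i) (- m) * (V (i + 1)%nat - V i))
  - chi / (m - 1) * sumR N (fun i => sumR N (fun j =>
      if Nat.eqb i j then 0 else
        (1 - m) * Rpower (Rabs (Y i - Y j)) (- m) * sg (Y i - Y j) * (V i - V j))).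

Lemma Rpower_gt0 x a : 0 < Rpower x a.
Proof. unfold Rpower. apply exp_pos. Qed.

Lemma is_derive_pow a y : 0 < y -> is_derive (fun x => Rpower x a) y (a * Rpower y (a - 1)).
Proof. intros. apply is_derive_Reals. apply derivable_pt_lim_power. auto. Qed.

Lemma is_derive_powabs a y : y <> 0 ->
  is_derive (fun x => Rpower (Rabs x) a) y (a * Rpower (Rabs y) (a - 1) * sg y).
Proof.
  intros Hy. unfold sg. destruct (Rlt_dec 0 y) as [Hp|Hn].
  - rewrite Rmult_1_r. apply is_derive_ext_loc with (fun x => Rpower x a).
    + exists (mkposreal y Hp). intros x Hx. change R in x. apply ball_R in Hx. cbn [pos] in Hx. unfold minus, plus, opp in Hx; simpl in Hx.
      rewrite Rabs_pos_eq; auto. apply Rabs_def2 in Hx. unfold minus, plus, opp in Hx; simpl in Hx. lra.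
    + rewrite Rabs_pos_eq by lra. apply is_derive_pow; auto.
  - assert (Hn' : 0 < - y) by lra.
    apply is_derive_ext_loc with (fun x => Rpower (- x) a).
    + exists (mkposreal (-y) Hn'). intros x Hx. change R in x. apply ball_R in Hx. cbn [pos] in Hx. unfold minus, plus, opp in Hx; simpl in Hx.
      rewrite Rabs_left; auto. apply Rabs_def2 in Hx. unfold minus, plus, opp in Hx; simpl in Hx. lra.
    + rewrite Rabs_left by lra.
      assert (H := is_derive_comp (fun x => Rpower x a) (fun x => - x) y _ (-1)
                     (is_derive_pow a (-y) Hn')).
      assert (H2 : is_derive (fun x : R => - x) y (-1)).
      { auto_derive; auto; ring. }
      specialize (H H2).
      replace (a * Rpower (- y) (a - 1) * -1) with (scal (-1) (a * Rpower (- y) (a - 1))).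
      exact H. unfold scal; simpl; unfold mult; simpl; ring.
Qed.

Lemma deriv_val D (f : R -> R) t a b : is_deriv_in D f t a -> a = b -> is_deriv_in D f t b.
Proof. intros H ->; exact H. Qed.

Lemma F_deriv N m chi D (g : R -> nat -> R) g' t :
  ordered N (g t) ->
  (forall j, (j < N)%nat -> is_deriv_in D (fun s => g s j) t (g' j)) ->
  is_deriv_in D (fun s => FNm N m chi (g s)) t (DF N m chi (g t) g').
Proof.
  intros Ho Hd. unfold FNm, DF.
  apply deriv_minus; apply deriv_scal.
  - apply (deriv_sumR D (N - 1) (fun s i => Rpower (g s (i + 1)%nat - g s i) (1 - m))).
    intros i Hi.
    eapply deriv_val.
    + apply (deriv_chain D (fun s => g s (i + 1)%nat - g s i) (fun y => Rpower y (1 - m))).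
      apply deriv_minus; apply Hd; lia.
      apply is_derive_pow. assert (H := Ho i ltac:(lia)). lra.
    + replace (1 - m - 1) with (- m) by ring. ring.
  - apply (deriv_sumR D N (fun s i => sumR N (fun j => if Nat.eqb i j then 0 else
        Rpower (Rabs (g s i - g s j)) (1 - m)))).
    intros i Hi.
    apply (deriv_sumR D N (fun s j => if Nat.eqb i j then 0 else
        Rpower (Rabs (g s i - g s j)) (1 - m))).
    intros j Hj. destruct (Nat.eqb_spec i j).
    + apply deriv_const.
    + eapply deriv_val.
      * apply (deriv_chain D (fun s => g s i - g s j) (fun y => Rpower (Rabs y) (1 - m))).
        apply deriv_minus; apply Hd; lia.
        apply is_derive_powabs. apply (ord_neq N); auto.
      * replace (1 - m - 1) with (- m) by ring. ring.
Qed.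

Definition ev (k : nat) : nat -> R := fun j => if Nat.eqb j k then 1 else 0.

Lemma first_e n (c : nat -> R) k :
  sumR n (fun i => c i * (ev k (i + 1)%nat - ev k i)) =
  (if Nat.ltb 0 k then (if Nat.ltb (k - 1) n then c (k - 1)%nat else 0) else 0)
  - (if Nat.ltb k n then c k else 0).
Proof.
  rewrite <- (sumR_delta n k c).
  destruct (Nat.ltb_spec 0 k).
  - rewrite <- (sumR_delta n (k-1) c), <- sumR_minus. apply sumR_ext. intros i _.
    unfold ev. destruct (Nat.eqb_spec (i+1) k), (Nat.eqb_spec i k), (Nat.eqb_spec i (k-1)); first [ring | lia].
  - transitivity (sumR n (fun i => 0 - (if Nat.eqb i k then c i else 0))).
    2: { rewrite sumR_minus, sumR_zero. reflexivity. }
    apply sumR_ext. intros i _.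
    unfold ev. destruct (Nat.eqb_spec (i+1) k), (Nat.eqb_spec i k); first [ring | lia].
Qed.

Lemma cross_e n (d : nat -> nat -> R) k : (k < n)%nat ->
  sumR n (fun i => sumR n (fun j => if Nat.eqb i j then 0 else d i j * (ev k i - ev k j))) =
  sumR n (fun j => if Nat.eqb k j then 0 else d k j) - sumR n (fun i => if Nat.eqb i k then 0 else d i k).
Proof.
  intros Hk.
  assert (E1 : sumR n (fun j => if Nat.eqb k j then 0 else d k j) =
     sumR n (fun i => if Nat.eqb i k then sumR n (fun j => if Nat.eqb i j then 0 else d i j) else 0)).
  { rewrite sumR_delta. destruct (Nat.ltb_spec k n); [reflexivity|lia]. }
  assert (E2 : sumR n (fun i => if Nat.eqb i k then 0 else d i k) =
     sumR n (fun i => sumR n (fun j => if Nat.eqb j k then (if Nat.eqb i j then 0 else d i j) else 0))).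
  { apply sumR_ext. intros i _. rewrite sumR_delta. destruct (Nat.ltb_spec k n); [|lia].
    rewrite Nat.eqb_sym. reflexivity. }
  rewrite E1, E2, <- sumR_minus. apply sumR_ext. intros i _.
  destruct (Nat.eqb_spec i k).
  - subst i. rewrite <- sumR_minus. apply sumR_ext. intros j _. unfold ev.
    rewrite Nat.eqb_refl.
    destruct (Nat.eqb_spec k j), (Nat.eqb_spec j k); subst; try lia; ring.
  - rewrite <- (sumR_zero n) at 1. rewrite <- sumR_minus. apply sumR_ext. intros j _. unfold ev.
    destruct (Nat.eqb_spec i j), (Nat.eqb_spec j k), (Nat.eqb_spec i k); subst; try lia; ring.
Qed.

Lemma DF_lin N m chi Y V W a b :
  DF N m chi Y (fun j => a * V j + b * W j) = a * DF N m chi Y V + b * DF N m chi Y W.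
Proof.
  unfold DF.
  set (c := fun i => (1 - m) * Rpower (Y (i + 1)%nat - Y i) (- m)).
  set (d := fun i j => (1 - m) * Rpower (Rabs (Y i - Y j)) (- m) * sg (Y i - Y j)).
  assert (E1 : sumR (N - 1) (fun i => (1 - m) * Rpower (Y (i + 1)%nat - Y i) (- m) *
      (a * V (i + 1)%nat + b * W (i + 1)%nat - (a * V i + b * W i))) =
      a * sumR (N - 1) (fun i => (1 - m) * Rpower (Y (i + 1)%nat - Y i) (- m) * (V (i + 1)%nat - V i))
    + b * sumR (N - 1) (fun i => (1 - m) * Rpower (Y (i + 1)%nat - Y i) (- m) * (W (i + 1)%nat - W i))).
  { rewrite <- sumR_lin. apply sumR_ext. intros; ring. }
  assert (E2 : sumR N (fun i => sumR N (fun j => if Nat.eqb i j then 0 else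
        (1 - m) * Rpower (Rabs (Y i - Y j)) (- m) * sg (Y i - Y j) * (a * V i + b * W i - (a * V j + b * W j)))) =
      a * sumR N (fun i => sumR N (fun j => if Nat.eqb i j then 0 else
        (1 - m) * Rpower (Rabs (Y i - Y j)) (- m) * sg (Y i - Y j) * (V i - V j)))
    + b * sumR N (fun i => sumR N (fun j => if Nat.eqb i j then 0 else
        (1 - m) * Rpower (Rabs (Y i - Y j)) (- m) * sg (Y i - Y j) * (W i - W j)))).
  { rewrite <- sumR_lin. apply sumR_ext. intros i _. rewrite <- sumR_lin. apply sumR_ext. intros j _.
    destruct (Nat.eqb i j); ring. }
  rewrite E1, E2. ring.
Qed.

Lemma DF_ext N m chi Y V W : (forall j, (j < N)%nat -> V j = W j) ->
  DF N m chi Y V = DF N m chi Y W.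
Proof.
  intros H. unfold DF.
  erewrite (sumR_ext (N - 1) _ (fun i => (1 - m) * Rpower (Y (i + 1)%nat - Y i) (- m) * (W (i + 1)%nat - W i))).
  erewrite (sumR_ext N _ (fun i => sumR N (fun j => if Nat.eqb i j then 0 else
        (1 - m) * Rpower (Rabs (Y i - Y j)) (- m) * sg (Y i - Y j) * (W i - W j)))).
  reflexivity.
  - intros i Hi. apply sumR_ext. intros j Hj. rewrite !H by lia. reflexivity.
  - intros i Hi. rewrite !H by lia. reflexivity.
Qed.

Lemma DF_decomp N m chi Y V :
  DF N m chi Y V = sumR N (fun k => V k * DF N m chi Y (ev k)).
Proof.
  set (P := fun n j => if Nat.ltb j n then V j else 0).
  assert (HP : forall n, DF N m chi Y (P n) = sumR n (fun k => V k * DF N m chi Y (ev k))).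
  { induction n.
    - replace (P 0%nat) with (fun j => 0 * Y j + 0 * Y j).
      + rewrite DF_lin. unfold sumR; simpl; ring.
      + apply functional_extensionality. intros j. unfold P. destruct (Nat.ltb_spec j 0); [lia|ring].
    - replace (P (S n)) with (fun j => 1 * P n j + V n * ev n j).
      + rewrite DF_lin, IHn, sumR_S. ring.
      + apply functional_extensionality. intros j. unfold P, ev.
        destruct (Nat.ltb_spec j n), (Nat.ltb_spec j (S n)), (Nat.eqb_spec j n); subst;
          first [ring | lia]. }
  rewrite <- HP. apply DF_ext. intros j Hj. unfold P. destruct (Nat.ltb_spec j N); [reflexivity|lia].
Qed.

Lemma sg_opp y : y <> 0 -> sg (- y) = - sg y.
Proof. intros. unfold sg. destruct (Rlt_dec 0 (-y)), (Rlt_dec 0 y); try lra. Qed.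

Lemma DF_e N m chi Y k : m <> 1 -> ordered N Y -> (k < N)%nat ->
  DF N m chi Y (ev k) = - rhs N m chi Y k.
Proof.
  intros Hm Ho Hk. unfold DF.
  assert (E1 := first_e (N - 1) (fun i => (1 - m) * Rpower (Y (i + 1)%nat - Y i) (- m)) k).
  cbv beta in E1. rewrite E1. clear E1.
  assert (E2 := cross_e N (fun i j => (1 - m) * Rpower (Rabs (Y i - Y j)) (- m) * sg (Y i - Y j)) k Hk).
  cbv beta in E2. rewrite E2. clear E2.
  set (T := sumR N (fun j => if Nat.eqb j k then 0 else sgn_nat j k * Rpower (Rabs (Y j - Y k)) (- m))).
  assert (E4 : sumR N (fun j => if Nat.eqb k j then 0 else (1 - m) * Rpower (Rabs (Y k - Y j)) (- m) * sg (Y k - Y j))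
      = (m - 1) * T).
  { unfold T. rewrite <- sumR_scal. apply sumR_ext. intros j Hj.
    destruct (Nat.eqb_spec k j), (Nat.eqb_spec j k); try lia; [ring|].
    rewrite Rabs_minus_sym. unfold sgn_nat, sg.
    destruct (Nat.ltb_spec k j), (Rlt_dec 0 (Y k - Y j)).
    - assert (Y k < Y j) by (apply (ord_lt N); auto). lra.
    - ring.
    - ring.
    - assert (Y j < Y k) by (apply (ord_lt N); auto; lia). lra. }
  assert (E3 : sumR N (fun i => if Nat.eqb i k then 0 else (1 - m) * Rpower (Rabs (Y i - Y k)) (- m) * sg (Y i - Y k))
      = - sumR N (fun j => if Nat.eqb k j then 0 else (1 - m) * Rpower (Rabs (Y k - Y j)) (- m) * sg (Y k - Y j))).
  { transitivity (-1 * sumR N (fun j => if Nat.eqb k j then 0 else (1 - m) * Rpower (Rabs (Y k - Y j)) (- m) * sg (Y k - Y j))); [|ring].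
    rewrite <- sumR_scal. apply sumR_ext. intros i Hi.
    destruct (Nat.eqb_spec i k), (Nat.eqb_spec k i); try lia; [ring|].
    rewrite (Rabs_minus_sym (Y i)). replace (Y i - Y k) with (- (Y k - Y i)) by ring.
    rewrite sg_opp. ring. apply (ord_neq N); auto. }
  rewrite E3, E4. unfold rhs. fold T.
  destruct (Nat.ltb_spec 0 k), (Nat.ltb_spec (k - 1) (N - 1)), (Nat.ltb_spec k (N - 1)),
    (Nat.ltb_spec (k + 1) N); try lia.
  all: try (replace (k - 1 + 1)%nat with k by lia).
  all: assert (m - 1 <> 0) by lra; field; auto.
Qed.

Lemma DF_euler N m chi Y : ordered N Y ->
  DF N m chi Y Y = (1 - m) * FNm N m chi Y.
Proof.
  intros Ho. unfold DF, FNm.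
  assert (E1 : sumR (N - 1) (fun i => (1 - m) * Rpower (Y (i + 1)%nat - Y i) (- m) * (Y (i + 1)%nat - Y i))
     = (1 - m) * sumR (N - 1) (fun i => Rpower (Y (i + 1)%nat - Y i) (1 - m))).
  { rewrite <- sumR_scal. apply sumR_ext. intros i Hi.
    assert (H := Ho i ltac:(lia)).
    replace (1 - m) with (- m + 1) at 3 by ring. rewrite Rpower_plus, Rpower_1 by lra. ring. }
  assert (E2 : sumR N (fun i => sumR N (fun j => if Nat.eqb i j then 0 else
        (1 - m) * Rpower (Rabs (Y i - Y j)) (- m) * sg (Y i - Y j) * (Y i - Y j)))
     = (1 - m) * sumR N (fun i => sumR N (fun j => if Nat.eqb i j then 0 else Rpower (Rabs (Y i - Y j)) (1 - m)))).
  { rewrite <- sumR_scal. apply sumR_ext. intros i Hi.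
    rewrite <- sumR_scal. apply sumR_ext. intros j Hj.
    destruct (Nat.eqb_spec i j); [ring|].
    assert (Hne := ord_neq N Y i j Ho n Hi Hj).
    replace (1 - m) with (- m + 1) at 3 by ring. rewrite Rpower_plus, Rpower_1.
    2: { apply Rabs_pos_lt; auto. }
    assert (Hs : sg (Y i - Y j) * (Y i - Y j) = Rabs (Y i - Y j)).
    { unfold sg. destruct (Rlt_dec 0 (Y i - Y j)).
      rewrite Rabs_pos_eq; lra. rewrite Rabs_left; lra. }
    rewrite <- Hs. ring. }
  replace (sumR (N - 1) (fun i => (1 - m) * Rpower (Y (i + 1)%nat - Y i) (- m) * (Y (i + 1)%nat - Y i)))
    with ((1 - m) * sumR (N - 1) (fun i => Rpower (Y (i + 1)%nat - Y i) (1 - m))) by (symmetry; exact E1).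
  rewrite E2. ring.
Qed.

Lemma deriv_interior D (f : R -> R) t l : is_deriv_in D f t l ->
  (exists d, 0 < d /\ forall s, Rabs (s - t) < d -> D s) -> is_derive f t l.
Proof.
  intros H [d0 [Hd0 HD]]. apply is_derive_Reals. intros eps Heps.
  destruct (proj1 (filterlim_locally _ _) H (mkposreal eps Heps)) as [d Hd].
  assert (Hm : 0 < Rmin d d0) by (apply Rmin_pos; [apply cond_pos|auto]).
  exists (mkposreal _ Hm). intros h Hh0 Hh. simpl in Hh.
  assert (Hb : ball t d (t + h)).
  { apply ball_R. replace (t + h - t) with h by ring. apply Rlt_le_trans with (1 := Hh), Rmin_l. }
  specialize (Hd (t + h) Hb).
  assert (Hin : D (t + h) /\ t + h <> t).
  { split. apply HD. replace (t + h - t) with h by ring. apply Rlt_le_trans with (1 := Hh), Rmin_r.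
    intro; apply Hh0; lra. }
  specialize (Hd Hin). apply ball_R in Hd. cbn [pos] in Hd.
  replace (t + h - t) with h in Hd by ring. exact Hd.
Qed.

Lemma gradF_eq N m chi Y k : m <> 1 -> ordered N Y -> (k < N)%nat ->
  gradF N m chi Y k = - rhs N m chi Y k.
Proof.
  intros Hm Ho Hk. unfold gradF. apply is_derive_unique.
  set (g := fun s j => if Nat.eqb j k then Y j + s else Y j).
  assert (Hg0 : g 0 = Y).
  { apply functional_extensionality. intros j. unfold g. destruct (Nat.eqb j k); ring. }
  assert (Hd := F_deriv N m chi (fun _ => True) g (ev k) 0 ltac:(rewrite Hg0; exact Ho)).
  rewrite Hg0, DF_e in Hd by auto.
  apply (deriv_interior (fun _ => True)).
  - apply Hd. intros j Hj. unfold g, ev. destruct (Nat.eqb j k).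
    + eapply deriv_val. apply deriv_plus. apply deriv_const. apply deriv_id. ring.
    + apply deriv_const.
  - exists 1. split; [lra|auto].
Qed.

Lemma sum_sq_normv N Y : normv N Y = 1 -> sumR N (fun i => Y i ^ 2) = 1.
Proof.
  unfold normv. intros H.
  assert (H0 : 0 <= sumR N (fun i => Y i ^ 2)) by (apply sumR_nonneg; intros; apply pow2_ge_0).
  rewrite <- (sqrt_sqrt _ H0), H. ring.
Qed.

Lemma H_nonneg N m chi Y : 1 < m -> ordered N Y -> normv N Y = 1 -> 0 <= HNm1 N m chi Y.
Proof.
  intros Hm Ho Hn. unfold HNm1.
  rewrite (sumR_ext N _ (fun i => (- rhs N m chi Y i) ^ 2)) by (intros; rewrite gradF_eq by (auto; lra); auto).
  assert (E : (m - 1) * FNm N m chi Y = - sumR N (fun i => Y i * (- rhs N m chi Y i))).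
  { rewrite <- (sumR_ext N (fun k => Y k * DF N m chi Y (ev k))) by (intros; rewrite DF_e by (auto; lra); auto).
    rewrite <- DF_decomp, DF_euler by auto. ring. }
  rewrite E.
  assert (Hcs := cs_unit N Y (fun i => - rhs N m chi Y i) (sum_sq_normv N Y Hn)).
  cbv beta in Hcs. nra.
Qed.

Lemma ordered_scal N Y c : 0 < c -> ordered N Y -> ordered N (fun i => c * Y i).
Proof. intros Hc Ho i Hi. apply Rmult_lt_compat_l; auto. Qed.

Lemma Rpow_scal c y a : 0 < c -> 0 < y -> Rpower (c * y) a = Rpower c a * Rpower y a.
Proof. intros. rewrite Rpower_mult_distr; auto. Qed.

Lemma F_homog N m chi Y c : 0 < c -> ordered N Y ->
  FNm N m chi (fun i => c * Y i) = Rpower c (1 - m) * FNm N m chi Y.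
Proof.
  intros Hc Ho. unfold FNm.
  assert (E1 : sumR (N - 1) (fun i => Rpower (c * Y (i + 1)%nat - c * Y i) (1 - m)) =
    Rpower c (1 - m) * sumR (N - 1) (fun i => Rpower (Y (i + 1)%nat - Y i) (1 - m))).
  { rewrite <- sumR_scal. apply sumR_ext. intros i Hi.
    replace (c * Y (i + 1)%nat - c * Y i) with (c * (Y (i + 1)%nat - Y i)) by ring.
    apply Rpow_scal; auto. assert (H := Ho i ltac:(lia)). lra. }
  assert (E2 : sumR N (fun i => sumR N (fun j => if Nat.eqb i j then 0 else Rpower (Rabs (c * Y i - c * Y j)) (1 - m))) =
    Rpower c (1 - m) * sumR N (fun i => sumR N (fun j => if Nat.eqb i j then 0 else Rpower (Rabs (Y i - Y j)) (1 - m)))).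
  { rewrite <- sumR_scal. apply sumR_ext. intros i Hi.
    rewrite <- sumR_scal. apply sumR_ext. intros j Hj.
    destruct (Nat.eqb_spec i j); [ring|].
    replace (c * Y i - c * Y j) with (c * (Y i - Y j)) by ring.
    rewrite Rabs_mult, (Rabs_pos_eq c) by lra.
    apply Rpow_scal; auto. apply Rabs_pos_lt. apply (ord_neq N); auto. }
  rewrite E1, E2. ring.
Qed.

Lemma rhs_homog N m chi Y c k : 0 < c -> ordered N Y -> (k < N)%nat ->
  rhs N m chi (fun i => c * Y i) k = Rpower c (- m) * rhs N m chi Y k.
Proof.
  intros Hc Ho Hk. unfold rhs.
  assert (E : sumR N (fun j => if Nat.eqb j k then 0 else sgn_nat j k * Rpower (Rabs (c * Y j - c * Y k)) (- m)) =
    Rpower c (- m) * sumR N (fun j => if Nat.eqb j k then 0 else sgn_nat j k * Rpower (Rabs (Y j - Y k)) (- m))).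
  { rewrite <- sumR_scal. apply sumR_ext. intros j Hj.
    destruct (Nat.eqb_spec j k); [ring|].
    replace (c * Y j - c * Y k) with (c * (Y j - Y k)) by ring.
    rewrite Rabs_mult, (Rabs_pos_eq c) by lra.
    rewrite Rpow_scal; [ring|auto|]. apply Rabs_pos_lt. apply (ord_neq N); auto. }
  rewrite E.
  assert (A1 : (k + 1 < N)%nat -> Rpower (c * Y (k + 1)%nat - c * Y k) (- m) = Rpower c (- m) * Rpower (Y (k + 1)%nat - Y k) (- m)).
  { intros Hk1. replace (c * Y (k + 1)%nat - c * Y k) with (c * (Y (k + 1)%nat - Y k)) by ring.
    apply Rpow_scal; auto. assert (H := Ho k Hk1); lra. }
  assert (A2 : (0 < k)%nat -> Rpower (c * Y k - c * Y (k - 1)%nat) (- m) = Rpower c (- m) * Rpower (Y k - Y (k - 1)%nat) (- m)).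
  { intros Hk1. replace (c * Y k - c * Y (k - 1)%nat) with (c * (Y k - Y (k - 1)%nat)) by ring.
    apply Rpow_scal; auto. assert (H := Ho (k - 1)%nat ltac:(lia)).
    replace (k - 1 + 1)%nat with k in H by lia; lra. }
  destruct (Nat.ltb_spec (k + 1) N), (Nat.ltb_spec 0 k); rewrite ?A1, ?A2 by auto.
  all: ring.
Qed.

Lemma cont_within D (g : R -> R) t l eps : is_deriv_in D g t l -> 0 < eps ->
  exists d, 0 < d /\ forall s, D s -> Rabs (s - t) < d -> Rabs (g s - g t) < eps.
Proof.
  intros H Heps. assert (Hc := deriv_cont _ _ _ _ H).
  destruct (proj1 (filterlim_locally _ _) Hc (mkposreal eps Heps)) as [d Hd].
  exists d. split. apply cond_pos. intros s Hs Hst.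
  destruct (Req_dec s t) as [->|Hne]. rewrite Rminus_eq_0, Rabs_R0; auto.
  assert (Hb : ball t d s) by (apply ball_R; auto).
  specialize (Hd s Hb (conj Hs Hne)). apply ball_R in Hd. exact Hd.
Qed.

Lemma nondecr (g g' : R -> R) a b : a <= b ->
  (forall s, a <= s <= b -> is_deriv_in (fun s => a <= s <= b) g s (g' s)) ->
  (forall s, a <= s <= b -> 0 <= g' s) -> g a <= g b.
Proof.
  intros Hab Hd Hpos. destruct (Req_dec a b) as [->|Hne]; [lra|].
  destruct (Rle_or_lt (g a) (g b)) as [|Hlt]; auto. exfalso.
  set (del := g a - g b).
  assert (Hdel : 0 < del / 3) by (unfold del; lra).
  destruct (cont_within _ _ _ _ _ (Hd a ltac:(lra)) Hdel) as [d1 [Hd1 H1]].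
  destruct (cont_within _ _ _ _ _ (Hd b ltac:(lra)) Hdel) as [d2 [Hd2 H2]].
  set (e := Rmin (Rmin d1 d2) (b - a) / 3).
  assert (He : 0 < e) by (unfold e; apply Rdiv_lt_0_compat; [apply Rmin_pos; [apply Rmin_pos|]|]; lra).
  assert (He1 : e < d1) by (unfold e; assert (Rmin (Rmin d1 d2) (b - a) <= d1) by
     (eapply Rle_trans; [apply Rmin_l|apply Rmin_l]); lra).
  assert (He2 : e < d2) by (unfold e; assert (Rmin (Rmin d1 d2) (b - a) <= d2) by
     (eapply Rle_trans; [apply Rmin_l|apply Rmin_r]); lra).
  assert (He3 : 3 * e <= b - a) by (unfold e; assert (Rmin (Rmin d1 d2) (b - a) <= b - a) by apply Rmin_r; lra).
  set (a' := a + e). set (b' := b - e).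
  assert (Ha' : Rabs (g a' - g a) < del / 3).
  { apply H1. unfold a'; lra. unfold a'. replace (a + e - a) with e by ring. rewrite Rabs_pos_eq; lra. }
  assert (Hb' : Rabs (g b' - g b) < del / 3).
  { apply H2. unfold b'; lra. unfold b'. replace (b - e - b) with (- e) by ring.
    rewrite Rabs_Ropp, Rabs_pos_eq; lra. }
  assert (Hder : forall x, a < x < b -> is_derive g x (g' x)).
  { intros x Hx. apply (deriv_interior (fun s => a <= s <= b)). apply Hd; lra.
    exists (Rmin (x - a) (b - x)). split. apply Rmin_pos; lra.
    intros s Hs. assert (Rmin (x - a) (b - x) <= x - a) by apply Rmin_l.
    assert (Rmin (x - a) (b - x) <= b - x) by apply Rmin_r.
    apply Rabs_def2 in Hs. lra. }
  destruct (MVT_gen g a' b' g') as [c [Hc Heq]].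
  - intros x Hx. rewrite Rmin_left, Rmax_right in Hx by (unfold a', b'; lra).
    apply Hder. unfold a', b' in Hx; lra.
  - intros x Hx. rewrite Rmin_left, Rmax_right in Hx by (unfold a', b'; lra).
    apply continuity_pt_filterlim. apply (ex_derive_continuous g x).
    exists (g' x). apply Hder. unfold a', b' in Hx; lra.
  - rewrite Rmin_left, Rmax_right in Hc by (unfold a', b'; lra).
    assert (0 <= g' c) by (apply Hpos; unfold a', b' in Hc; lra).
    assert (0 <= g b' - g a') by (rewrite Heq; apply Rmult_le_pos; unfold a', b'; lra).
    apply Rabs_def2 in Ha'. apply Rabs_def2 in Hb'. unfold del in *. lra.
Qed.

Lemma in_0T_between T a b s : in_0T T a -> in_0T T b -> a <= s <= b -> in_0T T s.
Proof.
  intros [Ha1 Ha2] [Hb1 Hb2] Hs. split. lra.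
  destruct T; simpl in *; auto. lra.
Qed.

Lemma concave_from T (f df d2f : R -> R) :
  (forall t, in_0T T t -> is_deriv_in (in_0T T) f t (df t)) ->
  (forall t, in_0T T t -> is_deriv_in (in_0T T) df t (d2f t)) ->
  (forall t, in_0T T t -> d2f t <= 0) ->
  concave_on (in_0T T) f.
Proof.
  intros Hf Hdf Hd2.
  assert (Hmono : forall s z, in_0T T s -> in_0T T z -> s <= z -> df z <= df s).
  { intros s z Hs Hz Hsz.
    assert (H := nondecr (fun u => - df u) (fun u => - d2f u) s z Hsz).
    assert (- df s <= - df z); [|lra]. apply H.
    - intros u Hu. apply deriv_opp. apply (deriv_sub (in_0T T)).
      intros v Hv. apply (in_0T_between T s z); auto.
      apply Hdf. apply (in_0T_between T s z); auto.
    - intros u Hu. assert (d2f u <= 0); [|lra]. apply Hd2. apply (in_0T_between T s z); auto. }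
  assert (Htan : forall w z, in_0T T w -> in_0T T z -> f w <= f z + df z * (w - z)).
  { intros w z Hw Hz. destruct (Rle_or_lt w z) as [Hwz|Hwz].
    - assert (H := nondecr (fun u => f u - df z * u) (fun u => df u - df z) w z Hwz).
      cut (f w - df z * w <= f z - df z * z); [nra|]. apply H.
      + intros u Hu. apply deriv_minus.
        apply (deriv_sub (in_0T T)). intros v Hv. apply (in_0T_between T w z); auto.
        apply Hf. apply (in_0T_between T w z); auto.
        eapply deriv_val. apply deriv_scal. apply deriv_id. ring.
      + intros u Hu. assert (df z <= df u); [|lra]. apply Hmono; auto.
        apply (in_0T_between T w z); auto. lra.
    - assert (H := nondecr (fun u => df z * u - f u) (fun u => df z - df u) z w ltac:(lra)).
      cut (df z * z - f z <= df z * w - f w); [nra|]. apply H.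
      + intros u Hu. apply deriv_minus.
        eapply deriv_val. apply deriv_scal. apply deriv_id. ring.
        apply (deriv_sub (in_0T T)). intros v Hv. apply (in_0T_between T z w); auto.
        apply Hf. apply (in_0T_between T z w); auto.
      + intros u Hu. assert (df u <= df z); [|lra]. apply Hmono; auto.
        apply (in_0T_between T z w); auto. lra. }
  intros x y l Hx Hy Hl.
  assert (Hz : in_0T T (l * x + (1 - l) * y)).
  { destruct (Rle_or_lt x y).
    - apply (in_0T_between T x y); auto. nra.
    - apply (in_0T_between T y x); auto. nra. }
  assert (H1 := Htan x _ Hx Hz). assert (H2 := Htan y _ Hy Hz).
  set (z := l * x + (1 - l) * y) in *.
  assert (E : l * (x - z) + (1 - l) * (y - z) = 0) by (unfold z; ring).
  assert (l * f x <= l * (f z + df z * (x - z))) by (apply Rmult_le_compat_l; lra).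
  assert ((1 - l) * f y <= (1 - l) * (f z + df z * (y - z))) by (apply Rmult_le_compat_l; lra).
  nra.
Qed.

Lemma sumR_ge_term n f i : (forall j, (j < n)%nat -> 0 <= f j) -> (i < n)%nat -> f i <= sumR n f.
Proof.
  induction n; intros H Hi. lia. rewrite sumR_S.
  destruct (Nat.eq_dec i n) as [->|Hne].
  - assert (0 <= sumR n f) by (apply sumR_nonneg; intros; apply H; lia). lra.
  - assert (f i <= sumR n f) by (apply IHn; [intros; apply H; lia|lia]).
    assert (0 <= f n) by (apply H; lia). lra.
Qed.

Lemma Rpower_inv x a : 0 < x -> Rpower (/ x) a = Rpower x (- a).
Proof. intros. unfold Rpower. rewrite ln_Rinv by auto. f_equal. ring. Qed.

Lemma Rpower_shift x a : 0 < x -> Rpower x (a + 1) = Rpower x a * x.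
Proof. intros. rewrite Rpower_plus, Rpower_1; auto. Qed.

Lemma S_pos N Y : (2 <= N)%nat -> ordered N Y -> 0 < sumR N (fun i => Y i ^ 2).
Proof.
  intros HN Ho.
  assert (H0 := sumR_ge_term N (fun i => Y i ^ 2) 0 ltac:(intros; apply pow2_ge_0) ltac:(lia)).
  assert (H1 := sumR_ge_term N (fun i => Y i ^ 2) 1 ltac:(intros; apply pow2_ge_0) ltac:(lia)).
  assert (H01 := Ho 0%nat ltac:(lia)). replace (0 + 1)%nat with 1%nat in H01 by lia. cbv beta in H0, H1.
  destruct (Rle_or_lt (sumR N (fun i => Y i ^ 2)) 0) as [Hle|]; auto.
  assert (Y 0%nat = 0) by nra. assert (Y 1%nat = 0) by nra. lra.
Qed.

Theorem proposition4p5 (m : R) (N : nat) (chi : R) (X0 : nat -> R)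
  (T : Rbar) (X : R -> nat -> R) :
  1 < m -> (2 <= N)%nat -> 0 < chi -> inRN N X0 ->
  is_maximal_solution N m chi X0 T X ->
  let f := fun t => / (m + 1) * Rpower (normv N (X t)) (m + 1) in
  let df := fun t => (m - 1) * FNm N m chi (X t) * Rpower (normv N (X t)) (m - 1) in
  let d2f := fun t => - ((m - 1) / (m + 1)) * / f t *
        HNm1 N m chi (fun i => X t i / normv N (X t)) in
  concave_on (in_0T T) f /\
  (forall t, in_0T T t ->
     is_deriv_in (in_0T T) f t (df t) /\ is_deriv_in (in_0T T) df t (d2f t)) /\
  (forall Y : nat -> R, inRN N Y -> normv N Y = 1 -> 0 <= HNm1 N m chi Y).
Proof.
  intros Hm HN Hchi HX0 [[HT [H0 Hsol]] _] f df d2f.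
  set (D := in_0T T).
  assert (Hm1 : m <> 1) by lra.
  assert (Hord : forall t, D t -> ordered N (X t)) by (intros t Ht; exact (proj1 (proj1 (Hsol t Ht)))).
  assert (Hcomp : forall t, D t -> forall i, (i < N)%nat ->
     is_deriv_in D (fun s => X s i) t (rhs N m chi (X t) i)) by (intros t Ht; exact (proj2 (Hsol t Ht))).
  assert (HS0 : forall t, D t -> 0 < sumR N (fun i => X t i ^ 2)) by (intros; apply S_pos; auto).
  assert (Hpos : forall t, D t -> 0 < normv N (X t)) by (intros; apply sqrt_lt_R0; auto).
  assert (HsumXr : forall t, D t ->
     sumR N (fun i => X t i * rhs N m chi (X t) i) = (m - 1) * FNm N m chi (X t)).
  { intros t Ht.
    transitivity (-1 * sumR N (fun k => X t k * DF N m chi (X t) (ev k))).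
    - rewrite <- sumR_scal. apply sumR_ext. intros i Hi. rewrite DF_e by auto. ring.
    - rewrite <- DF_decomp, DF_euler by auto. ring. }
  assert (HDFr : forall t, D t ->
     DF N m chi (X t) (rhs N m chi (X t)) = - sumR N (fun k => rhs N m chi (X t) k ^ 2)).
  { intros t Ht. rewrite DF_decomp.
    transitivity (-1 * sumR N (fun k => rhs N m chi (X t) k ^ 2)); [|ring].
    rewrite <- sumR_scal. apply sumR_ext. intros i Hi. rewrite DF_e by auto. ring. }
  assert (HS : forall t, D t -> is_deriv_in D (fun s => sumR N (fun i => X s i ^ 2)) t
     (2 * ((m - 1) * FNm N m chi (X t)))).
  { intros t Ht. eapply deriv_val.
    - apply (deriv_sumR D N (fun s i => X s i ^ 2) (fun i => 2 * (X t i * rhs N m chi (X t) i))).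
      intros i Hi. eapply deriv_val.
      + apply (deriv_chain D (fun s => X s i) (fun y => y ^ 2)). apply Hcomp; auto.
        apply is_derive_Reals. apply derivable_pt_lim_pow.
      + simpl. ring.
    - rewrite sumR_scal, HsumXr; auto. }
  assert (Hn : forall t, D t -> is_deriv_in D (fun s => normv N (X s)) t
     ((m - 1) * FNm N m chi (X t) / normv N (X t))).
  { intros t Ht. unfold normv. eapply deriv_val.
    - apply (deriv_chain D (fun s => sumR N (fun i => X s i ^ 2)) sqrt). apply HS; auto.
      apply is_derive_Reals. apply derivable_pt_lim_sqrt. auto.
    - assert (Hp := Hpos t Ht). unfold normv in Hp. field. lra. }
  assert (Hf : forall t, D t -> is_deriv_in D f t (df t)).
  { intros t Ht. unfold f, df. eapply deriv_val.
    - apply deriv_scal. apply (deriv_chain D (fun s => normv N (X s)) (fun y => Rpower y (m + 1))).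
      apply Hn; auto. apply is_derive_pow; auto.
    - assert (Hp := Hpos t Ht). replace (m + 1 - 1) with ((m - 1) + 1) by ring.
      rewrite Rpower_shift by auto. field. split; lra. }
  assert (Hd2 : forall t, D t -> is_deriv_in D df t (d2f t)).
  { intros t Ht. unfold df. eapply deriv_val.
    - apply (deriv_mult D (fun s => (m - 1) * FNm N m chi (X s)) (fun s => Rpower (normv N (X s)) (m - 1))).
      apply deriv_scal. apply F_deriv. apply Hord; auto. apply Hcomp; auto.
      apply (deriv_chain D (fun s => normv N (X s)) (fun y => Rpower y (m - 1))).
      apply Hn; auto. apply is_derive_pow; auto.
    - set (n := normv N (X t)). assert (Hp : 0 < n) by (apply Hpos; auto).
      unfold d2f, f. fold n.
      replace (fun i => X t i / n) with (fun i => / n * X t i)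
        by (apply functional_extensionality; intros; field; lra).
      assert (Hc : 0 < / n) by (apply Rinv_0_lt_compat; auto).
      unfold HNm1.
      rewrite (sumR_ext N _ (fun k => Rpower (/ n) (- m) ^ 2 * rhs N m chi (X t) k ^ 2)).
      2: { intros k Hk. rewrite gradF_eq by (auto; apply ordered_scal; auto).
           rewrite rhs_homog by auto. ring. }
      rewrite sumR_scal, F_homog by auto. rewrite HDFr by auto.
      rewrite !Rpower_inv by auto.
      set (Q := sumR N (fun k => rhs N m chi (X t) k ^ 2)).
      set (F := FNm N m chi (X t)).
      set (q := Rpower n (m - 2)).
      assert (Hq : 0 < q) by apply Rpower_gt0.
      assert (E1 : Rpower n (m - 1) = q * n).
      { unfold q. replace (m - 1) with ((m - 2) + 1) by ring. apply Rpower_shift; auto. }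
      assert (E2 : Rpower n (m - 1 - 1) = q).
      { unfold q. f_equal. ring. }
      assert (E3 : Rpower n (- - m) = q * n * n).
      { unfold q. replace (- - m) with ((m - 2) + 1 + 1) by ring. rewrite !Rpower_shift; auto. }
      assert (E4 : Rpower n (- (1 - m)) = q * n).
      { rewrite <- E1. f_equal. ring. }
      assert (E5 : Rpower n (m + 1) = q * n * n * n).
      { unfold q. replace (m + 1) with ((m - 2) + 1 + 1 + 1) by ring. rewrite !Rpower_shift; auto. }
      rewrite E1, E2, E3, E4, E5.
      field. repeat split; lra. }
  split; [|split].
  - apply concave_from with df d2f; auto.
    intros t Ht. unfold d2f.
    assert (Hp : 0 < normv N (X t)) by (apply Hpos; auto).
    assert (Hfp : 0 < f t) by (unfold f; apply Rmult_lt_0_compat; [apply Rinv_0_lt_compat; lra|apply Rpower_gt0]).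
    assert (HH : 0 <= HNm1 N m chi (fun i => X t i / normv N (X t))).
    { apply H_nonneg; auto.
      - replace (fun i => X t i / normv N (X t)) with (fun i => / normv N (X t) * X t i)
          by (apply functional_extensionality; intros; field; lra).
        apply ordered_scal; auto. apply Rinv_0_lt_compat; auto.
      - set (n := normv N (X t)) in *.
        assert (Hn2 : n ^ 2 = sumR N (fun i => X t i ^ 2)).
        { unfold n, normv. rewrite <- Rsqr_pow2. apply Rsqr_sqrt. apply Rlt_le, HS0, Ht. }
        assert (Es : sumR N (fun i => (X t i / n) ^ 2) = 1).
        { rewrite (sumR_ext N _ (fun i => / n ^ 2 * X t i ^ 2)).
          rewrite sumR_scal, <- Hn2. field. lra.
          intros i Hi. field. lra. }
        unfold normv at 1. rewrite Es. apply sqrt_1. }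
    assert (0 < (m - 1) / (m + 1)) by (apply Rdiv_lt_0_compat; lra).
    assert (0 < / f t) by (apply Rinv_0_lt_compat; auto).
    assert (0 <= (m - 1) / (m + 1) * / f t * HNm1 N m chi (fun i => X t i / normv N (X t)))
      by (apply Rmult_le_pos; [apply Rmult_le_pos|]; lra).
    lra.
  - intros t Ht. split; auto.
  - intros Y [HY _] HYn. apply H_nonneg; auto.
Qed.
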